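(* For every integer $g$ there is $t=t(g)$ such that for every $k\ge t$ there is a $k$-vertex exactly-$(2,t)$-degenerate bipartite graph of girth at least $g$.
   Context: A graph is exactly-$(2,t)$-degenerate if it can be obtained from a set of $t$ isolated vertices by repeatedly adding a new vertex adjacent to exactly $2$ of the existing vertices. The girth of a graph is the length of its shortest cycle (infinite if the graph has no cycle). *)

(* Defs.v *)
From mathcomp Require Import all_boot.
Set Implicit Arguments. Unset Strict Implicit. Unset Printing Implicit Defensive.

Definition simple_graph (T : finType) (e : rel T) : Prop :=
  symmetric e /\ irreflexive e.

Definition exactly_2t_degenerate (T : finType) (t : nat) (e : rel T) : Prop :=
  exists ord : T -> 'I_#|T|,
    injective ord /\
    (forall x y : T, ord x < t -> ord y < t -> ~~ e x y) /\
    (forall x : T, t <= ord x -> #|[set y | e x y & ord y < ord x]| = 2).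

Definition bipartite (T : finType) (e : rel T) : Prop :=
  exists c : T -> bool, forall x y : T, e x y -> c x != c y.

Definition girth_ge (T : finType) (g : nat) (e : rel T) : Prop :=
  forall c : seq T, uniq c -> 3 <= size c -> cycle e c -> g <= size c.

(* Main.v *)
Require Import Defs.
From mathcomp Require Import all_boot.
From mathcomp Require Import zify.
Set Implicit Arguments. Unset Strict Implicit. Unset Printing Implicit Defensive.

Record AS := MkAS { V : finType; f : bool -> V -> V; v0 : V;
  fne : forall v, f true v != f false v }.

Section Walk.
Variable H : AS.
Definition step := (V H * bool * bool)%type.
Definition src (x : step) := if x.2 then x.1.1 else f x.1.2 x.1.1.
Definition tgt (x : step) := if x.2 then f x.1.2 x.1.1 else x.1.1.
Definition rev (x : step) : step := (x.1, ~~ x.2).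
Definition link (x y : step) := (tgt x == src y) && (y != rev x).
Definition Pg g := forall w : seq step, w != [::] -> cycle link w -> g <= size w.

Lemma rev_neq x : x != rev x.
Proof. by case: x => a [] /=; rewrite /rev; apply/negP => /eqP []. Qed.
Lemma revK x : rev (rev x) = x.
Proof. by case: x => a b; rewrite /rev /= negbK. Qed.

Lemma uniq_map_inj (T U : eqType) (g : T -> U) s x y :
  uniq (map g s) -> x \in s -> y \in s -> g x = g y -> x = y.
Proof.
elim: s => // z s IH /= /andP [nz us]; rewrite !inE.
case/orP=> [/eqP->|xs]; case/orP=> [/eqP->|ys] //.
- by move=> e; move: nz; rewrite e map_f.
- by move=> e; move: nz; rewrite -e map_f.
- exact: IH.
Qed.

Lemma extract n (w : seq step) x0 : size w <= n -> w != [::] -> sorted link w ->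
  tgt (last x0 w) == src (head x0 w) ->
  exists q, [/\ q != [::], {subset q <= w}, cycle link q & uniq (map src q)].
Proof.
elim: n w => [|n IH] w; first by rewrite leqn0 => /eqP/size0nil->.
move=> sz wn sw cl.
case U: (uniq (map src w)).
  exists w; split => //.
  clear sz; case: w wn sw cl U => // x w' _ pw cl U; rewrite /= in pw cl.
  rewrite /= rcons_path pw /= /link cl /=.
  case: w' pw cl U => [|y w''] pw cl U.
    exact: rev_neq.
  apply/negP => /eqP ex.
  have ly : last y w'' = y.
    apply: (uniq_map_inj U); first by rewrite in_cons mem_last orbT.
      by rewrite !inE eqxx orbT.
    move: pw => /= /andP [/andP [/eqP t1 _] _].
    rewrite -t1 ex /=.
    by case: (last y w'') => [[a b] []].
  move: pw => /= /andP [/andP [_ ]]; rewrite ex /= ly revK.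
  by rewrite eqxx.
move/negbT: U => /(uniqPn (src x0)) [i [j [lij ljs]]].
rewrite size_map in ljs; rewrite !(nth_map x0) ?(ltn_trans lij) // => eij.
set q := take (j - i) (drop i w).
have szq : size q = j - i.
  by rewrite size_take size_drop ltn_sub2r // (ltn_trans lij).
have nthq m : m < j - i -> nth x0 q m = nth x0 w (i + m).
  by move=> mlt; rewrite nth_take // nth_drop.
have [q' [q'n sq' cq' uq']] : exists q', [/\ q' != [::], {subset q' <= q}, cycle link q' & uniq (map src q')].
  apply: (IH q).
  - rewrite szq; apply: leq_trans (leq_subr _ _) _; rewrite -ltnS; exact: leq_trans ljs sz.
  - by rewrite -size_eq0 szq subn_eq0 -ltnNge.
  - by apply: take_sorted; apply: drop_sorted.
  - rewrite -nth0 -nth_last szq nthq; last by rewrite prednK ?subn_gt0.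
    rewrite nthq ?subn_gt0 // addn0 eij.
    have -> : i + (j - i).-1 = j.-1 by lia.
    move/(sortedP x0): sw => /(_ j.-1); rewrite prednK ?(leq_ltn_trans _ lij) //.
    by move=> /(_ ljs) /andP [].
exists q'; split => // z /sq' zq; move: zq; by rewrite /q => /mem_take /mem_drop.
Qed.

Lemma uniq_arcs q : cycle link q -> uniq (map src q) -> uniq (map (fun x => x.1) q).
Proof.
move=> cq uq; rewrite map_inj_in_uniq; first exact: map_uniq uq.
move=> [a1 da] [b1 db] aq bq /= eab; subst b1.
case: (eqVneq da db) => [->//|ndb].
have brev : (a1, db) = rev (a1, da) by rewrite /rev /=; case: da db ndb aq bq {cq} => [] [].
have lk := next_cycle cq aq.
have nq : next q (a1, da) \in q by rewrite mem_next.
have e1 : (a1, db) = next q (a1, da).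
  apply: (uniq_map_inj uq) => //.
  move: lk => /andP [/eqP <- _]; rewrite brev.
  by rewrite /rev /src /tgt /=; case: (da).
by move: lk => /andP [_]; rewrite -e1 brev eqxx.
Qed.
End Walk.

Lemma double_count (T : eqType) (u s : seq T) : uniq u ->
  (forall a, a \in u -> 2 <= count_mem a s) -> 2 * size u <= size s.
Proof.
elim: u s => [|a u IH] s //= /andP [nau uu] cnt.
have e1 : size s = count_mem a s + size (filter (predC1 a) s).
  by rewrite size_filter count_predC.
have h2 : 2 * size u <= size (filter (predC1 a) s).
  apply: IH => // b bu; rewrite count_filter.
  rewrite (@eq_count _ _ (pred1 b)); first by apply: cnt; rewrite inE bu orbT.
  move=> z /=; case: (eqVneq z b) => [->|] //=.
  by case: (eqVneq b a) => // ba; move: nau; rewrite -ba bu.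
have := cnt a; rewrite inE eqxx => /(_ isT) ca.
by rewrite e1 mulnS; lia.
Qed.

Lemma key (H : AS) g (w : seq (step H)) : Pg H g -> w != [::] -> cycle (@link H) w ->
  (forall a, ~~ odd (count_mem a (map (fun x => x.1) w))) -> 2 * g <= size w.
Proof.
move=> Pgg; case: w => // x w' _ cw ev.
move: cw => /= ; rewrite rcons_path => /andP [pw lw].
have [q [qn sq cq uq]] := @extract H (size (x :: w')) (x :: w') x (leqnn _) isT pw (proj1 (andP lw)).
have gq := Pgg q qn cq.
have uaq := uniq_arcs cq uq.
apply: (leq_trans (leq_mul (leqnn 2) gq)).
suff: 2 * size (map (fun x => x.1) q) <= size (map (fun x => x.1) (x :: w')) by rewrite !size_map.
apply: double_count => // a /mapP [z zq ->].
have := ev z.1.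
have : 0 < count_mem z.1 (map (fun x => x.1) (x :: w')).
  by rewrite -has_count has_pred1; apply: map_f; apply: sq.
by case: (count_mem _ _) => [|[|c]].
Qed.


Definition cover (H : AS) : AS.
refine (@MkAS (V H * {ffun V H * bool -> bool})%type
  (fun b p => (@f H b p.1, [ffun a => p.2 a (+) (a == (p.1, b))])) (@v0 H, [ffun => false]) _).
by move=> [v s] /=; apply/negP=> /eqP [] /eqP; rewrite (negbTE (fne v)).
Defined.

Section Cover.
Variable H : AS.
Definition pi (x : step (cover H)) : step H := ((x.1.1.1, x.1.2), x.2).

Lemma tgt_flip (x : step (cover H)) :
  (tgt x).2 = [ffun a => (src x).2 a (+) (a == (pi x).1)].
Proof.
case: x => [[[v s] b] []]; apply/ffunP => a; rewrite !ffunE //=.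
by rewrite addbK.
Qed.

Lemma pi_src x : src (pi x) = (src x).1.
Proof. by case: x => [[[v s] b] []]. Qed.
Lemma pi_tgt x : tgt (pi x) = (tgt x).1.
Proof. by case: x => [[[v s] b] []]. Qed.

Lemma pi_link x y : link x y -> link (pi x) (pi y).
Proof.
rewrite /link pi_src pi_tgt => /andP [/eqP e nr].
rewrite e eqxx /=; apply: contra nr.
case: x y e => [[[v s] b] d] [[[v' s'] b'] d'] /=.
rewrite /rev /pi /tgt /src /= => e /eqP [ev eb ed]; subst v' b' d'.
case: d e => /= e.
- case: e => /ffunP e.
  have -> : s' = s by apply/ffunP => a; move: (e a); rewrite !ffunE => /addIb.
  by rewrite eqxx.
- by case: e => ->; rewrite eqxx.
Qed.

Lemma path_par (x0 : step (cover H)) (w : seq (step (cover H))) (a : V H * bool) : path (fun x y => tgt x == src y) x0 w ->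
  (tgt (last x0 w)).2 a = (tgt x0).2 a (+) odd (count_mem a (map (fun x => x.1) (map pi w))).
Proof.
elim: w x0 => [|y w IH] x0 /=; first by rewrite addbF.
move=> /andP [/eqP e p]; rewrite (IH y p) tgt_flip ffunE -e oddD.
by rewrite addbA; congr (_ (+) _ (+) _); rewrite eq_sym; case: eqP.
Qed.

Lemma cover_Pg g : Pg H g -> Pg (cover H) (2 * g).
Proof.
move=> Pgg w wn cw.
rewrite -(size_map pi).
apply: key => //; first by rewrite -size_eq0 size_map size_eq0.
  rewrite cycle_map; apply: sub_cycle cw => x y; exact: pi_link.
move=> a; case: w wn cw => // x w _ /= cw.
have p : path (fun u v => tgt u == src v) x (rcons w x).
  by apply: sub_path cw => u v /andP [].
have := path_par a p; rewrite last_rcons !map_rcons -cats1 count_cat /=.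
set C := odd _ => h.
have C0 : C = false by move: h; case: ((tgt x).2 a); case: C.
by move: C0; rewrite /C addn0 addnC => ->.
Qed.
End Cover.

Definition base : AS.
refine (@MkAS bool (fun b _ => b) true _). by [].
Defined.

Fixpoint Hj j := if j is j'.+1 then cover (Hj j') else base.

Lemma Hj_Pg j : Pg (Hj j) (2 ^ j).
Proof.
elim: j => [|j IH] /=.
  by move=> w wn _; rewrite expn0 lt0n size_eq0.
by rewrite expnS; apply: cover_Pg.
Qed.

Lemma next_next (T : eqType) (c : seq T) x : uniq c -> 3 <= size c -> x \in c ->
  next c (next c x) != x.
Proof.
move=> uc sc xc; case: (rot_to xc) => i s' ri.
have ur : uniq (rot i c) by rewrite rot_uniq.
rewrite -!(next_rot i uc) ri.
have : 3 <= size (rot i c) by rewrite size_rot.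
rewrite ri in ur *; case: s' ri ur => [|y [|z r]] //= _.
rewrite !inE => /andP [/norP [nxy /norP [nxz _]]] /andP [/norP [nyz _] _] _.
rewrite eqxx (eq_sym y x) (negbTE nxy) eqxx.
by rewrite eq_sym.
Qed.

Section Graph.
Variable H : AS.
Definition N := size (enum (V H)).
Definition nu r := nth (v0 H) (enum (V H)) r.
Definition idx (u : V H) := index u (enum (V H)).

Lemma N_gt0 : 0 < N.
Proof. by rewrite /N lt0n size_eq0; apply/eqP => e; have := mem_enum (V H) (v0 H); rewrite e. Qed.
Lemma idx_lt u : idx u < N.
Proof. by rewrite /idx /N index_mem mem_enum. Qed.
Lemma nu_idx u : nu (idx u) = u.
Proof. by rewrite /nu /idx nth_index ?mem_enum. Qed.
Lemma idx_nu r : r < N -> idx (nu r) = r.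
Proof. by move=> rN; rewrite /idx /nu index_uniq ?enum_uniq. Qed.
Lemma nu_inj r r' : r < N -> r' < N -> nu r = nu r' -> r = r'.
Proof. by move=> h h' e; rewrite -(idx_nu h) -(idx_nu h') e. Qed.

Definition down (x y : nat) := (x %/ N == (y %/ N).+1) &&
  ((nu (y %% N) == f true (nu (x %% N))) || (nu (y %% N) == f false (nu (x %% N)))).

Definition E k : rel 'I_k := fun x y => down x y || down y x.

Lemma nat_eq x y : x %/ N = y %/ N -> x %% N = y %% N -> x = y.
Proof. by move=> e1 e2; rewrite (divn_eq x N) (divn_eq y N) e1 e2. Qed.

Lemma modN x : x %% N < N. Proof. exact: ltn_pmod N_gt0. Qed.

Definition stp (x y : nat) : step H :=
  if down x y then (nu (x %% N), nu (y %% N) == f true (nu (x %% N)), true)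
  else (nu (y %% N), nu (x %% N) == f true (nu (y %% N)), false).

Lemma stp_src x y : down x y || down y x -> src (stp x y) = nu (x %% N).
Proof.
rewrite /stp /src; case: (down x y) => //= /andP [_].
case: eqP => [->//|_] /= /eqP //.
Qed.

Lemma stp_tgt x y : down x y || down y x -> tgt (stp x y) = nu (y %% N).
Proof.
rewrite /stp /tgt; case D: (down x y) => /=.
  move: D => /andP [_]; case: eqP => [->//|_] /= /eqP //.
by [].
Qed.

Lemma src_rev (s : step H) : src (rev s) = tgt s.
Proof. by case: s => [[v b] []]. Qed.
Lemma tgt_rev (s : step H) : tgt (rev s) = src s.
Proof. by case: s => [[v b] []]. Qed.

Lemma down_lvl x y : down x y -> x %/ N = (y %/ N).+1.
Proof. by move=> /andP [/eqP]. Qed.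

Lemma girth k g (c : seq 'I_k) : Pg H g -> uniq c -> 3 <= size c -> cycle (@E k) c ->
  g <= size c.
Proof.
move=> Pgg uc sc cc.
set w := map (fun x : 'I_k => stp x (next c x)) c.
have -> : size c = size w by rewrite size_map.
apply: Pgg; first by rewrite -size_eq0 size_map -lt0n; apply: leq_trans sc.
rewrite cycle_map.
apply: (@sub_in_cycle _ (mem c) (frel (next c))); last exact: cycle_next.
  move=> x y xc yc /= /eqP <-{y yc}.
  have exy : E x (next c x) := next_cycle cc xc.
  have yc : next c x \in c by rewrite mem_next.
  have eyz : E (next c x) (next c (next c x)) := next_cycle cc yc.
  rewrite /link (stp_tgt exy) (stp_src eyz) eqxx /=.
  apply/negP => /eqP es.
  have := next_next uc sc xc; set z := next c (next c x); set y := next c x.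
  move: exy eyz es; rewrite -/y -/z => exy eyz es.
  have em : z %% N = x %% N.
    apply: nu_inj; rewrite ?modN //.
    by rewrite -(stp_tgt eyz) es tgt_rev (stp_src exy).
  have ed : down y z = ~~ down x y.
    by move: (congr1 snd es); rewrite /stp /rev; case: (down x y); case: (down y z).
  have el : z %/ N = x %/ N.
    move: exy eyz; rewrite /E; case D: (down x y) => /=.
      rewrite D in ed; rewrite ed /= => _ /down_lvl h1.
      by rewrite h1 (down_lvl D).
    rewrite D in ed => /down_lvl h1 _.
    have h2 : down y z by rewrite ed.
    by move: h2 => /down_lvl; rewrite h1 => [[]] ->.
  by rewrite (val_inj (nat_eq el em)) eqxx.
by apply/allP.
Qed.
End Graph.

Section Props.
Variable H : AS.
Local Notation N := (N H).
Local Notation nu := (@nu H).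
Local Notation idx := (@idx H).
Local Notation down := (@down H).

Lemma E_simple k : symmetric (@E H k) /\ irreflexive (@E H k).
Proof.
split; first by move=> x y; rewrite /E orbC.
by move=> x; rewrite /E orbb /down ltn_eqF.
Qed.

Lemma E_bip k : exists c : 'I_k -> bool, forall x y : 'I_k, @E H k x y -> c x != c y.
Proof.
exists (fun x => odd (x %/ N)) => x y; rewrite /E.
by case/orP => /down_lvl -> /=; case: (odd _).
Qed.

Lemma E_degen k : exists ord : 'I_k -> 'I_#|'I_k|,
    injective ord /\
    (forall x y : 'I_k, ord x < N -> ord y < N -> ~~ @E H k x y) /\
    (forall x : 'I_k, N <= ord x -> #|[set y | @E H k x y & ord y < ord x]| = 2).
Proof.
exists (cast_ord (esym (card_ord k))); split; first exact: cast_ord_inj.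
have N0 := N_gt0 H.
split.
  move=> x y /= xN yN; rewrite /E /down !divn_small //.
move=> x /= Nx.
have q0 : 0 < x %/ N by rewrite divn_gt0.
have Yb b : (x %/ N).-1 * N + idx (f b (nu (x %% N))) < k.
  apply: leq_trans (ltn_ord x).
  apply: (@leq_trans ((x %/ N).-1 * N + N)); first by rewrite ltn_add2l idx_lt.
  by rewrite addnC -mulSn prednK // (leq_trans (leq_divM _ _)).
pose Y b : 'I_k := Ordinal (Yb b).
have Ylt b : Y b < x.
  apply: (@leq_trans ((x %/ N).-1 * N + N)); first by rewrite /= ltn_add2l idx_lt.
  by rewrite addnC -mulSn prednK // leq_divM.
have Ydiv b : (Y b) %/ N = (x %/ N).-1 by rewrite /= divnMDl // (divn_small (idx_lt _)) addn0.
have Ymod b : (Y b) %% N = idx (f b (nu (x %% N))) by rewrite /= modnMDl (modn_small (idx_lt _)).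
have -> : [set y | @E H k x y & cast_ord (esym (card_ord k)) y < cast_ord (esym (card_ord k)) x]
    = [set Y true; Y false].
  apply/setP => y; rewrite !inE /=.
  apply/idP/idP.
    case/andP => exy ylt.
    have dxy : down x y.
      move: exy; rewrite /E; case: (down x y) => //= /down_lvl h.
      have := leq_div2r N (ltnW ylt); rewrite h ltnNge => /negP; case.
      exact: leqnn.
    move: dxy => /andP [/eqP lv hb].
    have ey b : nu (y %% N) = f b (nu (x %% N)) -> y = Y b.
      move=> hy; apply: val_inj; apply: (@nat_eq H).
        by rewrite Ydiv lv.
      by rewrite Ymod -hy idx_nu // modN.
    by case/orP: hb => /eqP /ey ->; rewrite eqxx ?orbT.
  have hY b : @E H k x (Y b) && (Y b < x).
    rewrite Ylt andbT /E /down Ydiv Ymod nu_idx prednK // eqxx /=.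
    by case: b; rewrite eqxx ?orbT.
  by case/orP => /eqP ->.
rewrite cards2.
have -> : (Y true != Y false) => //.
apply/negP => /eqP /(congr1 val) /= e.
have := congr1 (fun n => nu (n %% N)) e; rewrite /= !modnMDl !(modn_small (idx_lt _)) !nu_idx.
by move/eqP; rewrite (negbTE (fne _)).
Qed.
End Props.

Theorem claim3p1 :
  forall g : nat, exists t : nat, forall k : nat, t <= k ->
    exists e : rel 'I_k,
      simple_graph e /\ exactly_2t_degenerate t e /\ bipartite e /\ girth_ge g e.
Proof.
move=> g; exists (N (Hj g)) => k _; exists (@E (Hj g) k).
split; first exact: E_simple.
split; first exact: E_degen.
split; first exact: E_bip.
move=> c uc sc cc.
apply: leq_trans (ltnW (@ltn_expl 2 g isT)) _.
exact: (girth (@Hj_Pg g) uc sc cc).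
Qed.
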